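(* Let $\epsilon\ge0$, let $I,J\subseteq\mathbb{R}$ be closed bounded intervals with $|I|\le|J|$, and let $\mu$ and $\nu$ be the uniform probability measures on $I$ and $J$. Consider binary classification in which the two labels are equally likely, the label associated with $\mu$ has input distribution $\mu$ and the other label has input distribution $\nu$, classifiers are indexed by closed sets $A\subseteq\mathbb{R}$ (output the $\mu$-label on $A$ and the $\nu$-label on $A^c$), with $0$-$1$ loss and adversarial risk $\mathbb{E}_{(x,y)}\big[\sup_{|x'-x|\le\epsilon}(\text{loss at }x')\big]$. Then the optimal robust risk (infimum over closed $A$) equals $\tfrac12\nu(I^{2\epsilon})$, and the classifier with $A=I^{\epsilon}$ is an optimal robust classifier.
   Context: For $S\subseteq\mathbb{R}$ and $\delta\ge0$, $S^\delta=\{x:|x-s|\le\delta\text{ for some }s\in S\}$. *)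

(* Defs.v *)
From HB Require Import structures.
From mathcomp Require Import all_boot all_order all_algebra.
From mathcomp Require Import all_classical all_reals all_analysis.
Set Implicit Arguments. Unset Strict Implicit. Unset Printing Implicit Defensive.
Import Order.TTheory GRing.Theory Num.Theory.
Import numFieldNormedType.Exports.
Local Open Scope classical_set_scope.
Local Open Scope ring_scope.

Definition thicken {R : realType} (S : set R) (delta : R) : set R :=
  [set x | exists2 s, S s & `|x - s| <= delta].

(* Labels: true = the mu-label, false = the nu-label.
   Classifier indexed by A outputs the mu-label on A, the nu-label on ~` A. *)
Definition classify {R : realType} (A : set R) (x : R) : bool :=
  `[< A x >].

Definition loss01 {R : realType} (A : set R) (x : R) (y : bool) : R :=
  if classify A x == y then 0 else 1.

Definition adv_loss {R : realType} (eps : R) (A : set R) (x : R) (y : bool)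
  : \bar R :=
  ereal_sup [set (loss01 A x' y)%:E | x' in [set x' | `|x' - x| <= eps]].

Definition adv_risk {R : realType} (mu nu : set R -> \bar R) (eps : R)
  (A : set R) : \bar R :=
  (2^-1%:E * (\int[mu]_x adv_loss eps A x true)
   + 2^-1%:E * (\int[nu]_x adv_loss eps A x false))%E.

(* Main.v *)
Require Import Defs.
From HB Require Import structures.
From mathcomp Require Import all_boot all_order all_algebra.
From mathcomp Require Import all_classical all_reals all_analysis.
From mathcomp Require Import lra.
Import Order.TTheory GRing.Theory Num.Theory.
Import numFieldNormedType.Exports.
Local Open Scope classical_set_scope.
Local Open Scope ring_scope.
Set Implicit Arguments. Unset Strict Implicit.
Local Open Scope ereal_scope.
Lemma int_indic_ge (R : realType) d (T : measurableType d) (mu : {measure set T -> \bar R})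
  (K H : set T) : measurable K -> K `<=` H -> mu K <= \int[mu]_x (\1_H x)%:E.
Proof.
move=> mK KH.
have -> : mu K = \int[mu]_x (\1_K x)%:E by rewrite integral_indic// setIT.
rewrite ge0_integralE; last by move=> x _; rewrite lee_fin.
rewrite ge0_integralE; last by move=> x _; rewrite lee_fin.
  apply: ereal_sup_le => _ [h hle <-]; exists h => // x.
  apply: (le_trans (hle x)); rewrite !patch_setT lee_fin !indicE.
  have [Kx|nKx] := pselect (K x).
    by rewrite mem_set // mem_set //; exact: KH.
  by rewrite memNset //; case: (_ \in _).
Qed.


Lemma unifE (R : realType) (a b : R) (ab : (a < b)%R) (S : set R) : measurable S ->
  uniform_prob ab S = ((b-a)^-1)%:E * lebesgue_measure (S `&` `[a,b]).
Proof.
move=> mS; rewrite /uniform_prob integral_uniform_pdf.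
rewrite -integral_cst; last by apply: measurableI.
apply: eq_integral => x; rewrite inE => -[_ /=]; rewrite in_itv/= => xab.
by rewrite /uniform_pdf xab.
Qed.


Local Close Scope ereal_scope.
Lemma thickenE (R : realType) (a b r : R) : a <= b -> (0 <= r)%R ->
  thicken `[a,b]%classic r = `[a - r, b + r]%classic.
Proof.
move=> ab r0; apply/seteqP; split => x /=.
- case=> s /=; rewrite !in_itv/= => /andP[hsa sb]; rewrite ler_norml => /andP[h1 h2].
  apply/andP; split; lra.
- rewrite in_itv/= => /andP[h1 h2].
  have [xa|ax] := ltP x a.
    exists a; first by rewrite /= in_itv/= lexx ab.
    rewrite ler_norml; apply/andP; split; lra.
  have [bx|xb] := ltP b x.
    exists b; first by rewrite /= in_itv/= lexx ab.
    rewrite ler_norml; apply/andP; split; lra.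
  exists x; first by rewrite /= in_itv/= ax xb.
  by rewrite subrr normr0.
Qed.
Section aux.
Context (R : realType) (eps : R) (heps : 0 <= eps).

Definition Gs (A : set R) := [set x : R | exists x', `|x' - x| <= eps /\ ~ A x'].
Definition Hs (A : set R) := [set x : R | exists x', `|x' - x| <= eps /\ A x'].

Lemma adv_true (A : set R) x : adv_loss eps A x true = (\1_(Gs A) x)%:E.
Proof.
rewrite /adv_loss indicE.
have [Gx|nGx] := pselect (Gs A x).
- rewrite mem_set //=; apply/le_anti/andP; split.
  + apply: ge_ereal_sup => _ [x' _ <-]; rewrite lee_fin /loss01; by case: ifP.
  + case: Gx => x' [hx' nA]; apply: ereal_sup_ubound; exists x' => //.
    by rewrite /loss01 /classify asboolF.
- rewrite memNset //=; apply/le_anti/andP; split.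
  + apply: ge_ereal_sup => _ [x' hx' <-].
    have Ax' : A x' by case: (pselect (A x')) => // nA; exfalso; apply: nGx; exists x'.
    by rewrite /loss01 /classify asboolT.
  + apply: ereal_sup_ubound; exists x => /=; first by rewrite subrr normr0.
    have Ax : A x by case: (pselect (A x)) => // nA; exfalso; apply: nGx; exists x; by rewrite subrr normr0.
    by rewrite /loss01 /classify asboolT.
Qed.

Lemma adv_false (A : set R) x : adv_loss eps A x false = (\1_(Hs A) x)%:E.
Proof.
rewrite /adv_loss indicE.
have [Gx|nGx] := pselect (Hs A x).
- rewrite mem_set //=; apply/le_anti/andP; split.
  + apply: ge_ereal_sup => _ [x' _ <-]; rewrite lee_fin /loss01; by case: ifP.
  + case: Gx => x' [hx' nA]; apply: ereal_sup_ubound; exists x' => //.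
    by rewrite /loss01 /classify asboolT.
- rewrite memNset //=; apply/le_anti/andP; split.
  + apply: ge_ereal_sup => _ [x' hx' <-].
    have Ax' : ~ A x' by move=> Ax'; apply: nGx; exists x'.
    by rewrite /loss01 /classify asboolF.
  + apply: ereal_sup_ubound; exists x => /=; first by rewrite subrr normr0.
    have Ax : ~ A x by move=> Ax; apply: nGx; exists x; by rewrite subrr normr0.
    by rewrite /loss01 /classify asboolF.
Qed.

Lemma Gs_open (A : set R) : closed A -> open (Gs A).
Proof.
move=> cA.
have -> : Gs A = \bigcup_(t in [set t : R | `|t| <= eps]) ((fun x => x + t) @^-1` (~` A)).
  apply/seteqP; split => x.
  - case=> x' [h1 h2]; exists (x' - x) => //=; by rewrite addrC subrK.
  - case=> t /= ht nA; exists (x + t); split => //; by rewrite addrC addKr.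
apply: bigcup_open => t _; apply: open_comp; last exact: closed_openC.
move=> x _; apply: continuousD; [exact: cvg_id| exact: cvg_cst].
Qed.

End aux.
Local Open Scope ereal_scope.
Lemma leb_oo (R : realType) (u v : R) : (u <= v)%R ->
  lebesgue_measure `]u, v[%classic = (v - u)%:E.
Proof.
move=> uv; rewrite lebesgue_measure_itv /= lte_fin; case: ifPn => [_|h].
  by rewrite -EFinD.
rewrite -leNgt in h; rewrite (_ : (v - u = 0)%R) //; lra.
Qed.

Lemma leb_cc (R : realType) (u v : R) : (u <= v)%R ->
  lebesgue_measure `[u, v]%classic = (v - u)%:E.
Proof.
move=> uv; rewrite lebesgue_measure_itv /= lte_fin; case: ifPn => [_|h].
  by rewrite -EFinD.
rewrite -leNgt in h; rewrite (_ : (v - u = 0)%R) //; lra.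
Qed.
Local Close Scope ereal_scope.

Lemma Hs_thicken (R : realType) (eps : R) (heps : 0 <= eps) (S : set R) :
  Hs eps (thicken S eps) = thicken S (2 * eps).
Proof.
apply/seteqP; split => x /=.
- case=> x' [h1 [s Ss h2]]; exists s => //.
  move: h1 h2; rewrite !ler_norml => /andP[h1 h1'] /andP[h2 h2'].
  apply/andP; split; lra.
- case=> s Ss h; exists ((x + s) / 2); split.
    move: h; rewrite !ler_norml => /andP[h1 h1'].
    apply/andP; split; lra.
  exists s => //.
  move: h; rewrite !ler_norml => /andP[h1 h1'].
  apply/andP; split; lra.
Qed.
Definition umu (R : realType) (a b : R) (ab : a < b) : set R -> \bar R := uniform_prob ab.
HB.instance Definition _ (R : realType) (a b : R) (ab : a < b) :=
  isMeasure.Build default_measure_display R R (umu ab)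
   (measure0 (uniform_prob ab)) (fun A => measure_ge0 (uniform_prob ab) A)
   (@measure_semi_sigma_additive _ _ _ (uniform_prob ab)).

Section main.
Context (R : realType) (eps a b c d : R) (heps : 0 <= eps) (ab : a < b) (cd : c < d)
  (hIJ : b - a <= d - c).
Local Notation mu := (uniform_prob ab).
Local Notation nu := (uniform_prob cd).
Local Notation lam := (@lebesgue_measure R).

Lemma int_true (P : {measure set R -> \bar R}) (A : set R) : closed A ->
  (\int[P]_x adv_loss eps A x true = P (Gs eps A))%E.
Proof.
move=> cA; under eq_integral => x _ do rewrite adv_true //.
rewrite integral_indic ?setIT //; exact: measurable_realfun.open_measurable (Gs_open cA).
Qed.

Lemma int_true_u (u v : R) (uv : u < v) (A : set R) : closed A ->
  (\int[umu uv]_x adv_loss eps A x true = uniform_prob uv (Gs eps A))%E.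
Proof. by move=> cA; rewrite int_true. Qed.

Lemma risk_A0 : adv_risk mu nu eps (thicken `[a,b] eps)
  = (2^-1%:E * nu (thicken `[a,b] (2*eps)))%E.
Proof.
have cA0 : closed (thicken `[a,b] eps).
  by rewrite thickenE ?(ltW ab) //; apply: interval_closed.
have mT2 : measurable (thicken `[a,b] (2*eps)).
  by rewrite thickenE ?(ltW ab) ?mulr_ge0 //; exact: measurable_itv.
rewrite /adv_risk -/(umu ab) -/(umu cd) int_true_u //.
under eq_integral => x _ do rewrite adv_false // Hs_thicken //.
rewrite integral_indic ?setIT //.
have mG := measurable_realfun.open_measurable (Gs_open (eps:=eps) cA0).
rewrite unifE // (_ : _ `&` _ = set0) ?measure0 ?mule0 ?add0e //.
apply/seteqP; split => // x [[x' [h1 h2]]] /=; rewrite in_itv /= => /andP[xa xb]; apply: h2.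
rewrite thickenE ?(ltW ab) // /= in_itv /=; move: h1; rewrite ler_norml => /andP[? ?].
apply/andP; split; lra.
Qed.

End main.
Section lower.
Context (R : realType) (eps a b c d : R) (heps : 0 <= eps) (ab : a < b) (cd : c < d)
  (hIJ : b - a <= d - c).
Local Notation mu := (uniform_prob ab).
Local Notation nu := (uniform_prob cd).
Local Notation lam := (@lebesgue_measure R).

Lemma risk_lb (A : set R) : closed A ->
  (2^-1%:E * nu (thicken `[a,b] (2*eps)) <= adv_risk mu nu eps A)%E.
Proof.
move=> cA.
have mG := measurable_realfun.open_measurable (Gs_open (eps:=eps) cA).
rewrite /adv_risk -/(umu ab) -/(umu cd) int_true_u //.
under eq_integral => x _ do rewrite adv_false //.
have hint0 : (0 <= \int[umu cd]_x (\1_(Hs eps A) x)%:E)%E.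
  by apply: integral_ge0 => x _; rewrite lee_fin.
rewrite -ge0_muleDr ?measure_ge0 //.
apply: lee_wpmul2l; first by rewrite lee_fin invr_ge0.
rewrite thickenE ?(ltW ab) ?mulr_ge0 //.
set I2 := `[a - 2*eps, b + 2*eps]%classic.
have mI2 : measurable I2 by exact: measurable_itv.
set E' := `[a,b]%classic `\` Gs eps A.
have mE' : measurable E' by apply: measurableD => //; exact: measurable_itv.
have [E0|/eqP/set0P [x0 E'x0]] := pselect (E' = set0).
  have nu1 : (nu I2 <= 1)%E := @probability_le1 _ (measurableTypeR R) R (uniform_prob cd) I2 mI2.
  apply: (le_trans nu1).
  apply: (le_trans _ (leeDl _ hint0)).
  have <- : mu `[a,b]%classic = 1%E by rewrite /uniform_prob integral_uniform_pdf1.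
  apply: (@le_measure _ _ (measurableTypeR R) (uniform_prob ab)).
  - by rewrite inE; apply: measurable_itv.
  - by rewrite inE; apply: mG.
  move=> x xab; case: (pselect (Gs eps A x)) => // nG.
  have : E' x by split.
  by rewrite E0.
have Eab : E' `<=` `[a,b]%classic by move=> x [].
have lbE : lbound E' a by move=> x /Eab; rewrite /= in_itv/= => /andP[].
have ubE : ubound E' b by move=> x /Eab; rewrite /= in_itv/= => /andP[].
have hasinf : has_inf E' by split; [exists x0 | exists a].
have hassup : has_sup E' by split; [exists x0 | exists b].
set e1 := inf E'; set e2 := sup E'.
have ae1 : a <= e1 by apply: lb_le_inf => //; exists x0.
have e1x : forall x, E' x -> e1 <= x by move=> x; apply: ge_inf; exists a.
have xe2 : forall x, E' x -> x <= e2 by move=> x; apply: ub_le_sup; exists b.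
have e2b : e2 <= b by apply: ge_sup => //; exists x0.
have e12 : e1 <= e2 := le_trans (e1x _ E'x0) (xe2 _ E'x0).
have inA : forall y, E' y -> forall x', `|x' - y| <= eps -> A x'.
  move=> y [_ nG] x' h; case: (pselect (A x')) => // nA; exfalso; apply: nG.
  by exists x'; split.
set O1 := `]e1 - 2*eps, e1[%classic.
set O2 := `]e2, e2 + 2*eps[%classic.
set K := O1 `|` E' `|` O2.
have mO1 : measurable O1 by exact: measurable_itv.
have mO2 : measurable O2 by exact: measurable_itv.
have mO1E : measurable (O1 `|` E') by exact: measurableU.
have mK : measurable K by exact: measurableU.
have KH : K `<=` Hs eps A.
  move=> z [ [ hO1 | hE ] | hO2 ].
  - move: hO1; rewrite /O1 /= in_itv /= => /andP[z1 z2].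
    have [ | y E'y hy] := @inf_adherent _ E' (z + 2*eps - e1) _ hasinf.
      by rewrite subr_gt0; lra.
    have ey := e1x _ E'y; rewrite -/e1 in hy.
    exists ((z + y)/2); split.
      by rewrite ler_norml; apply/andP; split; lra.
    by apply: (inA y E'y); rewrite ler_norml; apply/andP; split; lra.
  - exists z; split; first by rewrite subrr normr0.
    by apply: (inA z hE); rewrite subrr normr0.
  - move: hO2; rewrite /O2 /= in_itv /= => /andP[z1 z2].
    have [ | y E'y hy] := @sup_adherent _ E' (e2 + 2*eps - z) _ hassup.
      by rewrite subr_gt0; lra.
    have ey := xe2 _ E'y; rewrite -/e2 in hy.
    exists ((z + y)/2); split.
      by rewrite ler_norml; apply/andP; split; lra.
    by apply: (inA y E'y); rewrite ler_norml; apply/andP; split; lra.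
have KI2 : K `<=` I2.
  move=> z [ [ hO1 | hE ] | hO2 ]; rewrite /I2 /= in_itv /=.
  - move: hO1; rewrite /O1 /= in_itv /= => /andP[h1 h2]; apply/andP.
    have h3 := le_trans e12 e2b.
    split.
    + move: h1 ae1 heps; lra.
    + move: h2 h3 heps; lra.
  - move: (Eab _ hE); rewrite /= in_itv/= => /andP[h1 h2]; apply/andP.
    split; [move: h1 heps | move: h2 heps]; lra.
  - move: hO2; rewrite /O2 /= in_itv /= => /andP[h1 h2]; apply/andP.
    have h3 := le_trans ae1 e12.
    split; [move: h1 h3 heps | move: h2 e2b heps]; lra.
have mD : measurable (I2 `\` K) by exact: measurableD.
have step1 : (nu I2 <= nu K + nu (I2 `\` K))%E.
  apply: le_trans (@measureU2 _ (measurableTypeR R) R nu _ _ mK mD).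
  apply: (@le_measure _ _ (measurableTypeR R) nu).
  - by rewrite inE.
  - by rewrite inE; exact: measurableU.
  - by move=> x I2x; case: (pselect (K x)) => Kx; [left|right].
apply: (le_trans step1); rewrite addeC; apply: leeD; last first.
  exact: (int_indic_ge (umu cd) mK KH).
have mab : measurable `[a,b]%classic by exact: measurable_itv.
have lab : lam `[a,b]%classic = (b - a)%:E by rewrite leb_cc // ltW.
have lEle : (lam E' <= (b - a)%:E)%E.
  by rewrite -lab; apply: (@le_measure _ _ (measurableTypeR R) lam) => //; rewrite inE.
have lE'fin : lam E' \is a fin_num.
  rewrite ge0_fin_numE ?measure_ge0 //; exact: le_lt_trans lEle (ltry _).
set l := fine (lam E').
have lE : lam E' = l%:E by rewrite fineK.
have lle : l <= b - a by rewrite -lee_fin -lE.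
have l0 : 0 <= l by rewrite -lee_fin -lE measure_ge0.
have d2 : (O1 `|` E') `&` O2 = set0.
  apply/seteqP; split => // z [[hO1|hE] hO2].
  - move: hO1 hO2; rewrite /O1 /O2 /= !in_itv /= => /andP[h1 h2] /andP[h3 h4].
    move: h2 h3 e12; lra.
  - move: hO2 (xe2 _ hE); rewrite /O2 /= !in_itv /= => /andP[h3 h4] h5.
    move: h3 h5; lra.
have d1 : O1 `&` E' = set0.
  apply/seteqP; split => // z [hO1 hE].
  move: hO1 (e1x _ hE); rewrite /O1 /= !in_itv /= => /andP[h1 h2] h5.
  move: h2 h5; lra.
have eqK : lam K = (lam O1 + lam E' + lam O2)%E.
  by rewrite /K (@measureU _ _ (measurableTypeR R) lam) // (@measureU _ _ (measurableTypeR R) lam).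
have lamK : lam K = (4 * eps + l)%:E.
  rewrite eqK /O1 /O2 !leb_oo; [|move: heps; lra|move: heps; lra].
  rewrite lE -!EFinD; congr EFin; move: heps; lra.
have lI2 : lam I2 = (b + 2 * eps - (a - 2 * eps))%:E.
  by rewrite /I2 leb_cc //; move: heps (ltW ab); lra.
have lamD : lam (I2 `\` K) = (b - a - l)%:E.
  have eqD : lam (I2 `\` K) = (lam I2 - lam (I2 `&` K))%E.
    have fI2 : (lam I2 < +oo)%E by rewrite lI2 ltry.
    by rewrite (@measureD _ (measurableTypeR R) R lam).
  rewrite eqD setIidr // lamK lI2.
  rewrite -EFinB; congr EFin; lra.
have lamG : lam (Gs eps A `&` `[a,b]%classic) = (b - a - l)%:E.
  have -> : Gs eps A `&` `[a,b]%classic = `[a,b]%classic `\` E'.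
    apply/seteqP; split => x.
      by move=> [Gx abx]; split => // -[_]; apply.
    move=> [abx nE]; split => //; case: (pselect (Gs eps A x)) => // nG.
    by exfalso; apply: nE; split.
  have eqD : lam (`[a,b]%classic `\` E') = (lam `[a,b]%classic - lam (`[a,b]%classic `&` E'))%E.
    have fab : (lam `[a,b]%classic < +oo)%E by rewrite lab ltry.
    by rewrite (@measureD _ (measurableTypeR R) R lam).
  by rewrite eqD setIidr // lab lE -EFinB.
rewrite (unifE ab) // lamG (unifE cd) //.
have hle : (lam ((I2 `\` K) `&` `[c,d]%classic) <= lam (I2 `\` K))%E.
  apply: (@le_measure _ _ (measurableTypeR R) lam).
  - by rewrite inE; apply: measurableI; [exact: mD | exact: measurable_itv].
  - by rewrite inE.
  - exact: subIsetl.
apply: le_trans (lee_wpmul2l _ hle) _; first by rewrite lee_fin invr_ge0 ltW // subr_gt0.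
rewrite lamD -!EFinM lee_fin; apply: ler_wpM2r; first by move: lle; lra.
rewrite lef_pV2 ?posrE ?subr_gt0 //.
Qed.
End lower.

Theorem theorem9 (R : realType) (eps a b c d : R)
  (heps : 0 <= eps) (ab : a < b) (cd : c < d) (hIJ : b - a <= d - c) :
  let mu := uniform_prob ab in
  let nu := uniform_prob cd in
  let I := `[a, b]%classic in
  ereal_inf [set adv_risk mu nu eps A | A in [set A : set R | closed A]]
    = (2^-1%:E * nu (thicken I (2 * eps)))%E
  /\ adv_risk mu nu eps (thicken I eps)
    = ereal_inf [set adv_risk mu nu eps A | A in [set A : set R | closed A]].
Proof.
move=> mu nu I.
have cA0 : closed (thicken I eps).
  by rewrite thickenE ?(ltW ab) //; apply: interval_closed.
have key : ereal_inf [set adv_risk mu nu eps A | A in [set A : set R | closed A]]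
    = (2^-1%:E * nu (thicken I (2 * eps)))%E.
  apply/le_anti/andP; split.
  - rewrite -(risk_A0 heps ab cd); apply: ereal_inf_lbound.
    by exists (thicken I eps).
  - apply: le_ereal_inf_tmp => _ [A cA <-].
    exact: (risk_lb heps ab cd hIJ cA).
split => //.
by rewrite key (risk_A0 heps ab cd).
Qed.
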